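(* Every bridged graph satisfies the triangle diamond condition $(TDC)$; consequently every bridged graph is a diamond-weakly modular graph.
   Context: All graphs are finite, simple and connected; $d$ denotes the shortest-path distance. A graph is bridged if it has no isometric cycle of length greater than $3$. A diamond is $K_4$ minus one edge. Triangle diamond condition $(TDC)$: for any three vertices $u,v,w$ with $1=d(v,w)<d(u,v)=d(u,w)$, there exists a common neighbor $z$ of $v$ and $w$ with $d(u,z)=d(u,v)-1$ such that $z$ is adjacent to every vertex $x$ with $d(x,v)=1$, $d(u,x)=d(u,v)-1$ and to every vertex $y$ with $d(y,w)=1$, $d(u,y)=d(u,w)-1$ (so that $v,w,z$ form diamonds with such $x$ and $y$). Quadrangle condition $(QC)$: for any four vertices $u,v,w,y$ with $d(v,y)=d(w,y)=1$ and $2=d(v,w)\le d(u,v)=d(u,w)=d(u,y)-1$, there exists a common neighbor $z$ of $v$ and $w$ with $d(u,z)=d(u,v)-1$. A graph is diamond-weakly modular if its distance function satisfies $(QC)$ and $(TDC)$. *)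

(* Defs.v *)
From mathcomp Require Import all_boot.
Set Implicit Arguments. Unset Strict Implicit. Unset Printing Implicit Defensive.

Section Graphs.
Variable T : finType.
Variable e : rel T.

Definition simple_connected_graph : Prop :=
  [/\ symmetric e, irreflexive e & forall x y : T, connect e x y].

Fixpoint walkn (n : nat) (x y : T) : bool :=
  if n is n'.+1 then [exists z, e x z && walkn n' z y] else x == y.

(* In a connected graph this is the usual graph distance,
   since a shortest walk has fewer than #|T| edges. *)
Definition dist (x y : T) : nat := find (fun n => walkn n x y) (iota 0 #|T|).

Definition cyc_dist (k i j : nat) : nat :=
  let a := maxn i j - minn i j in minn a (k - a).

(* s = [:: v_0; ...; v_{k-1}] is a cycle of G: k >= 3 distinct vertices,
   consecutive ones adjacent and v_{k-1} adjacent to v_0 (MathComp's cycle). *)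
Definition is_cycle (s : seq T) : Prop :=
  [/\ 3 <= size s, uniq s & cycle e s].

(* The cycle is isometric: distances in G between its vertices equal the
   distances along the cycle.  (x0 is only the default of nth; indices are in
   range, so it is irrelevant.) *)
Definition isometric_cycle (s : seq T) : Prop :=
  is_cycle s /\
  forall (x0 : T) i j, i < size s -> j < size s ->
    dist (nth x0 s i) (nth x0 s j) = cyc_dist (size s) i j.

Definition bridged : Prop :=
  forall s : seq T, isometric_cycle s -> ~ (3 < size s).

Definition TDC : Prop :=
  forall u v w : T, 1 = dist v w -> dist v w < dist u v -> dist u v = dist u w ->
    exists z : T,
      [/\ e v z, e w z, dist u z = dist u v - 1,
          (forall x, dist x v = 1 -> dist u x = dist u v - 1 -> x != z -> e z x) &
          (forall y, dist y w = 1 -> dist u y = dist u w - 1 -> y != z -> e z y)].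

Definition QC : Prop :=
  forall u v w y : T, dist v y = 1 -> dist w y = 1 ->
    2 = dist v w -> dist v w <= dist u v -> dist u v = dist u w ->
    dist u w = dist u y - 1 ->
    exists z : T, [/\ e v z, e w z & dist u z = dist u v - 1].

Definition diamond_weakly_modular : Prop := QC /\ TDC.

End Graphs.

(* Main.v *)
Require Import Defs.
From mathcomp Require Import all_boot.
From mathcomp Require Import zify.
Set Implicit Arguments. Unset Strict Implicit. Unset Printing Implicit Defensive.

Section Basics.
Variable T : finType.
Variable e : rel T.
Hypothesis esym : symmetric e.
Hypothesis eirr : irreflexive e.
Hypothesis econ : forall x y : T, connect e x y.

Local Notation d := (dist e).
Local Notation W := (walkn e).

Lemma walkn_add m n x z : W (m + n) x z <-> exists y, W m x y /\ W n y z.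
Proof.
elim: m x => [|m IH] x /=.
  split; first by move=> H; exists x.
  by case=> y [/eqP -> ].
split.
  case/existsP=> y /andP [exy /IH [y' [H1 H2]]].
  by exists y'; split => //; apply/existsP; exists y; rewrite exy.
case=> y [/existsP [y' /andP [exy' H1]] H2].
apply/existsP; exists y'; rewrite exy' /=; apply/IH; by exists y.
Qed.

Lemma walkn_path n x y : W n x y <-> exists p, [/\ size p = n, path e x p & last x p = y].
Proof.
elim: n x => [|n IH] x /=.
  split; first by move/eqP ->; exists [::].
  by case=> [[|z p]] [//= _ _ ->].
split.
  case/existsP=> z /andP [exz /IH [p [H1 H2 H3]]].
  by exists (z :: p); rewrite /= exz H1 H2 H3.
case=> [[|z p]] [] //= /eqP; rewrite eqSS => /eqP Hs /andP [exz Hp] Hl.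
apply/existsP; exists z; rewrite exz /=; apply/IH; by exists p.
Qed.

Lemma walk_short n x y : W n x y -> exists m, m < #|T| /\ W m x y.
Proof.
move/walkn_path=> [p [_ Hp <-]].
case: (shortenP Hp) => p' Hp' Hu _.
exists (size p'); split; last by apply/walkn_path; exists p'.
have := card_uniqP Hu; move=> H; have := max_card (mem (x :: p')).
by rewrite H /=.
Qed.

Lemma walk_exists x y : exists m, m < #|T| /\ W m x y.
Proof.
have /connectP [p Hp Hl] := econ x y.
apply: (@walk_short (size p)); apply/walkn_path; by exists p.
Qed.

Lemma dist_lt x y : d x y < #|T|.
Proof.
have [m [Hm Hw]] := walk_exists x y.
have Hh : has (fun n => W n x y) (iota 0 #|T|).
  by apply/hasP; exists m => //; rewrite mem_iota.
by rewrite has_find size_iota in Hh.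
Qed.

Lemma dist_walk x y : W (d x y) x y.
Proof.
have [m [Hm Hw]] := walk_exists x y.
have Hh : has (fun n => W n x y) (iota 0 #|T|).
  by apply/hasP; exists m => //; rewrite mem_iota.
have H := nth_find 0 Hh.
change (W (nth 0 (iota 0 #|T|) (d x y)) x y = true) in H.
by rewrite nth_iota ?dist_lt // add0n in H.
Qed.

Lemma dist_min n x y : W n x y -> d x y <= n.
Proof.
move=> Hw; case: (ltnP n #|T|) => Hn; last by apply: ltnW; apply: leq_trans (dist_lt x y) Hn.
rewrite leqNgt; apply/negP => Hlt.
have := before_find 0 Hlt; rewrite nth_iota // add0n.
by rewrite Hw.
Qed.

Lemma dxx x : d x x = 0.
Proof. apply/eqP; rewrite -leqn0; apply: dist_min; by rewrite /= eqxx. Qed.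

Lemma d0 x y : d x y = 0 -> x = y.
Proof. move=> H; have := dist_walk x y; rewrite H /=; by move/eqP. Qed.

Lemma walkn_rev n x y : W n x y -> W n y x.
Proof.
elim: n x y => [|n IH] x y; first by move=> /= /eqP ->; rewrite /= eqxx.
move=> /existsP [z /andP [exz Hw]].
have := IH _ _ Hw => Hw'.
have -> : n.+1 = n + 1 by rewrite addn1.
apply/walkn_add; exists z; split => //=.
apply/existsP; exists x; by rewrite esym exz eqxx.
Qed.

Lemma dsym x y : d x y = d y x.
Proof.
apply/eqP; rewrite eqn_leq; apply/andP; split; apply: dist_min; apply: walkn_rev; exact: dist_walk.
Qed.

Lemma dtri x y z : d x z <= d x y + d y z.
Proof. apply: dist_min; apply/walkn_add; exists y; split; exact: dist_walk. Qed.

Lemma d1 x y : e x y -> d x y = 1.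
Proof.
move=> H; apply/eqP; rewrite eqn_leq; apply/andP; split.
  apply: dist_min => /=; apply/existsP; exists y; by rewrite H eqxx.
rewrite lt0n; apply/eqP => /d0 E; by rewrite E eirr in H.
Qed.

Lemma d1E x y : d x y = 1 -> e x y.
Proof.
move=> H; have := dist_walk x y; rewrite H /=.
by case/existsP=> z /andP [exz /eqP <-].
Qed.

Lemma dstep n x y : d x y = n.+1 -> exists z, e x z /\ d z y = n.
Proof.
move=> H; have := dist_walk x y; rewrite H /=.
case/existsP=> z /andP [exz Hw]; exists z; split => //.
apply/eqP; rewrite eqn_leq dist_min //=.
have := dtri x z y; rewrite H (d1 exz); by rewrite add1n ltnS.
Qed.

Lemma dedge c a b : e a b -> d c a <= d c b + 1.
Proof. move=> H; have := dtri c b a; by rewrite (dsym b a) (d1 H). Qed.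

Hypothesis hbr : bridged e.

Lemma iso_cycle N (g : nat -> T) : 3 < N ->
  (forall a b, a < N -> b < N -> d (g a) (g b) = cyc_dist N a b) -> False.
Proof.
move=> HN Hg.
pose s := mkseq g N.
have Hs : size s = N by rewrite size_mkseq.
have Hiso : isometric_cycle e s.
  split; last first.
    move=> x0 i j Hi Hj; rewrite Hs in Hi Hj *; rewrite !nth_mkseq //; exact: Hg.
  split.
  - by rewrite Hs ltnW.
  - rewrite /s /mkseq map_inj_in_uniq ?iota_uniq // => a b; rewrite !mem_iota !add0n => Ha Hb Eg.
    have := Hg a b Ha Hb; rewrite Eg dxx /cyc_dist /=. lia.
  - rewrite (cycle_path (g 0)); apply/(pathP (g 0)) => i Hi; rewrite Hs in Hi.
    case: i Hi => [|i] Hi /=.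
      rewrite -(nth_last (g 0)) Hs !nth_mkseq //; last by lia.
      apply: d1E; rewrite Hg /cyc_dist /=; lia.
    rewrite !nth_mkseq //; try lia.
    apply: d1E; rewrite Hg /cyc_dist /=; lia.
by apply: (hbr Hiso); rewrite Hs.
Qed.

Lemma c5_false v0 v1 v2 v3 v4 : e v0 v1 -> e v1 v2 -> e v2 v3 -> e v3 v4 -> e v4 v0 ->
  d v0 v2 = 2 -> d v0 v3 = 2 -> d v1 v3 = 2 -> d v1 v4 = 2 -> d v2 v4 = 2 -> False.
Proof.
move=> e01 e12 e23 e34 e40 h02 h03 h13 h14 h24.
apply: (@iso_cycle 5 (nth v0 [:: v0; v1; v2; v3; v4])) => // a b.
have s01 := d1 e01; have s12 := d1 e12; have s23 := d1 e23; have s34 := d1 e34; have s40 := d1 e40.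
case: a => [|[|[|[|[|a]]]]] //; case: b => [|[|[|[|[|b]]]]] // => _ _ /=;
  rewrite /cyc_dist /= ?dxx //; try (rewrite dsym; by []); by [].
Qed.


Definition geo c k y (p : nat -> T) :=
  [/\ p 0 = y, forall i, i <= k -> d c (p i) = k - i & forall i, i < k -> e (p i) (p i.+1)].

Lemma geo_exists c k y : d c y = k -> exists p, geo c k y p.
Proof.
elim: k y => [|k IH] y Hy.
  by exists (fun _ => y); split => // i _; rewrite Hy.
have [z [eyz Hz]] : exists z, e y z /\ d z c = k by apply: dstep; rewrite dsym.
have [p [hp0 hpl hpe]] : exists p, geo c k z p by apply: IH; rewrite dsym.
exists (fun i => if i is i'.+1 then p i' else y); split => //.
  by case=> [|i] Hi //; rewrite hpl.
case=> [|i] Hi; first by rewrite hp0.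
exact: hpe.
Qed.

Lemma geo_le c k y p i t : geo c k y p -> i + t <= k -> d (p i) (p (i + t)) <= t.
Proof.
case=> _ _ hpe; elim: t => [|t IH] H; first by rewrite addn0 dxx.
have := dtri (p i) (p (i + t)) (p (i + t.+1)).
rewrite addnS (d1 (hpe _ _)); last by lia.
have H' : i + t <= k by lia.
have := IH H'; lia.
Qed.

Lemma geo_dd c k y p i j : geo c k y p -> i <= j -> j <= k -> d (p i) (p j) = j - i.
Proof.
move=> G Hij Hj; apply/eqP; rewrite eqn_leq; apply/andP; split.
  have := @geo_le c k y p i (j - i) G; rewrite subnKC //; apply; lia.
case: G => _ hpl _.
have := dtri c (p j) (p i); rewrite !hpl //; last by lia.
rewrite dsym; lia.
Qed.

Lemma geo_lev c k y p i : geo c k y p -> i <= k -> d c (p i) = k - i.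
Proof. by case=> _ h _; apply: h. Qed.

Lemma geo_edge c k y p i : geo c k y p -> i < k -> e (p i) (p i.+1).
Proof. by case=> _ _ h; apply: h. Qed.

Lemma geo0 c k y p : geo c k y p -> p 0 = y.
Proof. by case. Qed.

Lemma geo_y c k y p i : geo c k y p -> i <= k -> d y (p i) = i.
Proof. move=> G Hi; rewrite -(geo0 G) (geo_dd G) //; lia. Qed.

Lemma geo_c c k y p i : geo c k y p -> i <= k -> d (p i) c = k - i.
Proof. move=> G Hi; rewrite dsym; exact: geo_lev G Hi. Qed.

Definition clqL c L := forall x y z, d c x = L -> e x y -> e x z ->
  d c y = L - 1 -> d c z = L - 1 -> y != z -> e y z.
Definition tcL c L := forall v w, d c v = L -> d c w = L -> e v w ->
  exists m, [/\ e v m, e w m & d c m = L - 1].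

Lemma dedge2 c a b : e a b -> d c b <= d c a + 1.
Proof. by move=> H; apply: dedge; rewrite esym. Qed.

Section TypeA.
Variables (c x : T) (k : nat).
Hypothesis Hx : d c x = k.+1.
Hypothesis HA : forall c' L, L <= k -> clqL c' L /\ tcL c' L.

Definition cfgA y z := [/\ d c y = k, d c z = k, e x y, e x z & y != z] /\ ~~ e y z.
Definition violA (p q : nat -> T) i l :=
  [/\ i <= k, l <= k & d (p i) (q l) < minn (i + l + 2) (2 * k - i - l)].

Lemma cfgA_sym y z : cfgA y z -> cfgA z y.
Proof. by case=> [[h1 h2 h3 h4 h5] h6]; split; [split=> //; rewrite eq_sym | rewrite esym]. Qed.

Lemma dxp y p i : d c y = k -> e x y -> geo c k y p -> i <= k -> d x (p i) = i.+1.
Proof.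
move=> Hy exy G Hi; apply/eqP; rewrite eqn_leq; apply/andP; split.
  have := dtri x y (p i); rewrite (d1 exy) (geo_y G Hi); lia.
have := dtri c (p i) x; rewrite Hx (geo_lev G Hi) dsym; lia.
Qed.

Lemma ubA y z p q i l : cfgA y z -> geo c k y p -> geo c k z q -> i <= k -> l <= k ->
  d (p i) (q l) <= minn (i + l + 2) (2 * k - i - l).
Proof.
case=> [[hy hz exy exz _] _] Gp Gq Hi Hl.
have h1 := dtri (p i) x (q l).
have h2 := dtri (p i) c (q l).
rewrite (dsym (p i) x) (dxp hy exy Gp Hi) in h1; rewrite (dxp hz exz Gq Hl) in h1.
rewrite (geo_c Gp Hi) (geo_lev Gq Hl) in h2.
lia.
Qed.

Lemma claimA s : forall y z p q i l, cfgA y z -> geo c k y p -> geo c k z q ->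
  i + l = s -> ~ violA p q i l.
Proof.
elim/ltn_ind: s => s IH.
have base : forall y z p q i l, cfgA y z -> geo c k y p -> geo c k z q ->
    i + l = s -> violA p q i l -> 0 < l -> False.
  move=> y z p q i l Hc Gp Gq Hs [Hi Hlk Hlt] Hl.
  case: l Hl Hs Hlk Hlt => [//|l1] _ Hs Hlk Hlt.
  have E : forall i' l', i' <= k -> l' <= k -> i' + l' < s ->
      d (p i') (q l') = minn (i' + l' + 2) (2 * k - i' - l').
    move=> i' l' Hi' Hl' Hs'; apply/eqP; rewrite eqn_leq (ubA Hc Gp Gq Hi' Hl') /=.
    rewrite leqNgt; apply/negP => H.
    exact: (IH (i' + l') _ y z p q i' l' Hc Gp Gq erefl).
  case: (Hc) => [[hy hz exy exz nyz] neyz].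
  set P := p i.
  have Eb := E i l1 Hi (ltnW Hlk) ltac:(clear -Hs; lia).
  have eb : e (q l1) (q l1.+1) by apply: (geo_edge Gq).
  have tri := dtri P (q l1.+1) (q l1).
  rewrite (dsym (q l1.+1) (q l1)) (d1 eb) in tri.
  have Hsk : s < k by move: Hlt Eb tri; rewrite -/P; clear -Hs; lia.
  have Hdd : d P (q l1.+1) = s \/ d P (q l1.+1) = s.+1
    by move: Hlt Eb tri; rewrite -/P; clear -Hs; lia.
  have HbP : d P (q l1) = s.+1 by rewrite Eb; clear -Hsk Hs; lia.
  clear Hlt Eb tri.
  have lql := geo_lev Gq Hlk.
  have [a [dPa lca eab Ea]] : exists a, [/\ d P a = s, d c a = (k - l1).+1, e a (q l1)
      & (if l1 is l2.+1 then a = q l2 else a = x)].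
    case: l1 Hs Hlk lql eb HbP Hdd => [|l2] Hs Hlk lql eb HbP Hdd.
      exists x; split => //; first by rewrite dsym (dxp hy exy Gp Hi); clear -Hs; lia.
        by rewrite Hx; clear -Hlk; lia.
      by rewrite /= (geo0 Gq).
    exists (q l2); split => //.
    - rewrite E //; try (clear -Hsk Hs; lia); clear -Hlk; lia.
    - rewrite (geo_lev Gq) //; clear -Hlk; lia.
    - by apply: (geo_edge Gq); clear -Hlk; lia.
  have Hnq : forall u, e a u -> d c u = k - l1.+1 -> False.
    move=> u eau lu; have := dedge c eau; rewrite lca lu; clear -Hlk; lia.
  have naq : a != q l1.+1.
    by apply/eqP => E'; move: lca; rewrite E' lql; clear -Hlk; lia.
  have [clP tcP] := HA P Hsk.
  case: Hdd => Hdd.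
    apply: (Hnq (q l1.+1)) lql.
    apply: (clP (q l1)) => //; first by rewrite esym.
      by rewrite dPa subn1.
    by rewrite Hdd subn1.
  have [m [ebm eqm dPm]] := tcP (q l1) (q l1.+1) HbP Hdd eb.
  rewrite subn1 /= in dPm.
  case: (a =P m) => [Eam|Nam].
    by apply: (Hnq (q l1.+1)) lql; rewrite Eam esym.
  have eam : e a m.
    apply: (clP (q l1)) => //; first by rewrite esym.
    - by rewrite dPa subn1.
    - by rewrite dPm subn1.
    - by apply/eqP.
  have lm : d c m = k - l1.
    have := dedge c eam; have := dedge2 c eqm; rewrite lca lql; clear -Hlk; lia.
  case: l1 Hs Hlk lql eb HbP Hdd ebm eqm lm Hnq naq eab lca eam dPa Nam Ea
    => [|l2] Hs Hlk lql eb HbP Hdd ebm eqm lm Hnq naq eab lca eam dPa Nam Ea.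
    subst a.
    have ezm : e z m by rewrite -(geo0 Gq).
    case: i Hi Hs @P dPm dPa Hdd HbP clP tcP => [|i] Hi Hs P dPm dPa Hdd HbP clP tcP.
      have hP : P = y by rewrite /P (geo0 Gp).
      rewrite hP in dPm Hdd.
      have Hs1 : s = 1 by clear -Hs; lia.
      subst s.
      have eym := d1E dPm.
      have [clc tcc] := HA c (leqnn k).
      have lm' : d c m = k by rewrite lm subn0.
      have [a' [eya' ema' la']] := tcc y m hy lm' eym.
      have lq1 : d c (q 1) = k - 1 by rewrite lql.
      case: (a' =P q 1) => [Ea'|Na'].
        by move: Hdd; rewrite -Ea' (d1 eya').
      have ea'q : e a' (q 1).
        apply: (clc m) => //; first by rewrite esym.
        by apply/eqP.
      have dxa' : d x a' = 2.
        have := dtri x y a'; have := dtri c a' x.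
        rewrite (d1 exy) (d1 eya') Hx la' (dsym a' x); clear -Hsk; lia.
      case Ha'z : (e a' z).
        have [cla' _] := HA a' (ltac:(clear -Hsk; lia) : 2 <= k).
        have h1 : d a' y = 2 - 1 by rewrite dsym (d1 eya').
        have h2 : d a' z = 2 - 1 by rewrite (d1 Ha'z).
        have h3 : d a' x = 2 by rewrite dsym.
        by rewrite (cla' x y z h3 exy exz h1 h2 nyz) in neyz.
      have ezq1 : e z (q 1) by rewrite -(geo0 Gq); exact: geo_edge Gq Hlk.
      apply: (@c5_false x y a' (q 1) z) => //.
      - by rewrite esym.
      - by rewrite esym.
      - have := dtri x z (q 1); have := dtri c (q 1) x.
        rewrite (d1 exz) (d1 ezq1) Hx lq1 (dsym (q 1) x); clear -Hsk; lia.
      - have := dtri y x z; rewrite (dsym y x) (d1 exy) (d1 exz).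
        case: (d y z =P 0) => [/d0 E'|]; first by rewrite E' eqxx in nyz.
        case: (d y z =P 1) => [/d1E E'|]; first by rewrite E' in neyz.
        clear; lia.
      - have := dtri a' (q 1) z; rewrite (d1 ea'q) (dsym (q 1) z) (d1 ezq1).
        case: (d a' z =P 0) => [/d0 E'|]; first by move: la'; rewrite E' hz; clear -Hsk; lia.
        case: (d a' z =P 1) => [/d1E E'|]; first by rewrite E' in Ha'z.
        clear; lia.
    case: (y =P m) => [Eym|Nym].
      by move: neyz; rewrite Eym esym ezm.
    case Hym : (e y m).
      have := E 0 1 (ltac:(clear -Hsk; lia) : 0 <= k) Hlk (ltac:(clear -Hs; lia) : 1 < s).
      rewrite (geo0 Gp).
      have := dtri y m (q 1); rewrite (d1 Hym) (dsym m (q 1)) (d1 eqm) => h1 h2.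
      rewrite h2 in h1; clear -h1 Hsk Hs; lia.
    pose q' := fun j => if j is j'.+1 then q j else m.
    have Gq' : geo c k m q'.
      split => //.
      - case=> [|j] Hj; [rewrite lm; clear; lia | exact: geo_lev Gq Hj].
      - case=> [|j] Hj /=; first by rewrite esym.
        exact: geo_edge Gq Hj.
    have Hc' : cfgA y m.
      split; last by rewrite Hym.
      split => //; try (by rewrite lm subn0); by apply/eqP.
    apply: (IH i.+1 _ y m p q' i.+1 0 Hc' Gp Gq' (addn0 i.+1)); first by clear -Hs; lia.
    split; [exact: Hi | by [] | rewrite /q' -/P dPm; clear -Hsk Hs; lia].
  pose q' := fun j => if j == l2.+1 then m else q j.
  have Gq' : geo c k z q'.
    split.
    - by rewrite /q'; exact: geo0 Gq.
    - move=> j Hj; rewrite /q'; case: eqP => [->|_]; [rewrite lm; clear; lia | exact: geo_lev Gq Hj].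
    - move=> j Hj; rewrite /q'; case: eqP => [Ej|Nj]; case: eqP => [Ej'|Nj'].
      + clear -Ej Ej'; lia.
      + have -> : j.+1 = l2.+2 by clear -Ej; lia. by rewrite esym.
      + have E2 : j = l2 by clear -Ej'; lia.
        by rewrite E2 -Ea.
      + exact: geo_edge Gq Hj.
  apply: (IH (i + l2.+1) _ y z p q' i l2.+1 Hc Gp Gq' erefl); first by clear -Hs; lia.
  split => //; first by clear -Hlk; lia.
  by rewrite /q' eqxx -/P dPm; clear -Hs Hsk; lia.
move=> y z p q i l Hc Gp Gq Hs Hv.
case: (posnP l) => [l0|]; last exact: base y z p q i l Hc Gp Gq Hs Hv.
subst l; case: (posnP i) => [i0|i0].
  subst i; case: Hv => _ _; case: Hc => [[hy hz exy exz nyz] neyz].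
  rewrite (geo0 Gp) (geo0 Gq).
  case: (d y z =P 0) => [/d0 E'|]; first by rewrite E' eqxx in nyz.
  case: (d y z =P 1) => [/d1E E'|]; first by rewrite E' in neyz.
  lia.
apply: (base z y q p 0 i (cfgA_sym Hc) Gq Gp) => //; first by rewrite add0n -Hs addn0.
case: Hv => h1 h2 h3; split => //; rewrite dsym; move: h3; rewrite add0n addn0; lia.
Qed.


Lemma cyc_sym N a b : cyc_dist N a b = cyc_dist N b a.
Proof. by rewrite /cyc_dist /= maxnC (minnC a b). Qed.

Lemma typeA_false y z : cfgA y z -> False.
Proof.
move=> Hc; case: (Hc) => [[hy hz exy exz nyz] neyz].
have k0 : 0 < k.
  case: (posnP k) => // k0; rewrite k0 in hy hz.
  by rewrite -(d0 hy) -(d0 hz) eqxx in nyz.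
have [p Gp] := geo_exists hy.
have [q Gq] := geo_exists hz.
have Hpq : forall i l, i <= k -> l <= k -> d (p i) (q l) = minn (i + l + 2) (2 * k - i - l).
  move=> i l Hi Hl; apply/eqP; rewrite eqn_leq (ubA Hc Gp Gq Hi Hl) /= leqNgt.
  apply/negP => H; apply: (@claimA (i + l) y z p q i l Hc Gp Gq erefl); by split.
pose g j := if j == 0 then x else if j <= k.+1 then p j.-1 else q (2 * k + 1 - j).
apply: (@iso_cycle (2 * k + 2) g); first by clear -k0; lia.
move=> a b Ha Hb.
wlog Hab : a b Ha Hb / a <= b.
  move=> W; case: (leqP a b) => H; first exact: W.
  by rewrite dsym cyc_sym W // ltnW.
rewrite /g.
case: a Ha Hab => [|a] Ha Hab /=.
  case: b Hb Hab => [|b] Hb _ /=; first by rewrite dxx /cyc_dist /=; clear; lia.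
  case: ifP => Hbk.
    rewrite (dxp hy exy Gp Hbk) /cyc_dist /=; clear -Hbk; lia.
  move/negbT: Hbk; rewrite -ltnNge => Hbk.
  rewrite (dxp hz exz Gq); last by clear -Hb Hbk; lia.
  rewrite /cyc_dist /=; clear -Hb Hbk; lia.
case: b Hb Hab => [|b] Hb Hab //=.
case: ifP => Hak; case: ifP => Hbk.
- rewrite (geo_dd Gp) // /cyc_dist /=; clear -Hab Hbk; lia.
- move/negbT: Hbk; rewrite -ltnNge => Hbk.
  rewrite Hpq; try (clear -Hak; lia); try (clear -Hb Hbk; lia).
  rewrite /cyc_dist /=; clear -Hab Hb Hak Hbk; lia.
- move/negbT: Hak; rewrite -ltnNge => Hak.
  clear -Hab Hak Hbk; lia.
- move/negbT: Hbk; rewrite -ltnNge => Hbk.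
  move/negbT: Hak; rewrite -ltnNge => Hak.
  rewrite dsym (geo_dd Gq); try (clear -Hab Hb Hbk Hak; lia).
  rewrite /cyc_dist /=; clear -Hab Hb Hak Hbk; lia.
Qed.

End TypeA.

Section TypeB.
Variables (c : T) (n : nat).
Hypothesis HB1 : forall c' L, L < n -> tcL c' L.
Hypothesis HB2 : forall c' L, L <= n -> clqL c' L.

Definition cfgB v w := [/\ d c v = n, d c w = n, e v w &
  forall m, e v m -> e w m -> d c m != n - 1].
Definition violB (p q : nat -> T) i l :=
  [/\ i <= n, l <= n & d (p i) (q l) < minn (i + l + 1) (2 * n - i - l)].

Lemma cfgB_sym v w : cfgB v w -> cfgB w v.
Proof.
case=> h1 h2 h3 h4; split => //; first by rewrite esym.
by move=> m H1 H2; apply: h4.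
Qed.

Lemma ubB v w p q i l : cfgB v w -> geo c n v p -> geo c n w q -> i <= n -> l <= n ->
  d (p i) (q l) <= minn (i + l + 1) (2 * n - i - l).
Proof.
case=> hv hw evw _ Gp Gq Hi Hl.
have h1 := dtri (p i) v (q l).
have h3 := dtri v w (q l).
have h2 := dtri (p i) c (q l).
rewrite (dsym (p i) v) (geo_y Gp Hi) in h1.
rewrite (d1 evw) (geo_y Gq Hl) in h3.
rewrite (geo_c Gp Hi) (geo_lev Gq Hl) in h2.
clear -h1 h2 h3 Hi Hl; lia.
Qed.

Lemma claimB s : forall v w p q i l, cfgB v w -> geo c n v p -> geo c n w q ->
  i + l = s -> ~ violB p q i l.
Proof.
elim/ltn_ind: s => s IH.
have base : forall v w p q i l, cfgB v w -> geo c n v p -> geo c n w q ->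
    i + l = s -> violB p q i l -> 0 < l -> False.
  move=> v w p q i l Hc Gp Gq Hs [Hi Hlk Hlt] Hl.
  case: l Hl Hs Hlk Hlt => [//|l1] _ Hs Hlk Hlt.
  have E : forall i' l', i' <= n -> l' <= n -> i' + l' < s ->
      d (p i') (q l') = minn (i' + l' + 1) (2 * n - i' - l').
    move=> i' l' Hi' Hl' Hs'; apply/eqP; rewrite eqn_leq (ubB Hc Gp Gq Hi' Hl') /=.
    rewrite leqNgt; apply/negP => H.
    exact: (IH (i' + l') _ v w p q i' l' Hc Gp Gq erefl).
  case: (Hc) => hv hw evw nocom.
  set P := p i.
  have Eb := E i l1 Hi (ltnW Hlk) ltac:(clear -Hs; lia).
  have eb : e (q l1) (q l1.+1) by apply: (geo_edge Gq).
  have tri := dtri P (q l1.+1) (q l1).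
  rewrite (dsym (q l1.+1) (q l1)) (d1 eb) in tri.
  have Hsn : s <= n by move: Hlt Eb tri; rewrite -/P; clear -Hs; lia.
  have Hdd : d P (q l1.+1) = s - 1 \/ (d P (q l1.+1) = s /\ s < n)
    by move: Hlt Eb tri; rewrite -/P; clear -Hs; lia.
  have HbP : d P (q l1) = s by rewrite Eb; clear -Hsn Hs; lia.
  clear Hlt Eb tri.
  have lql := geo_lev Gq Hlk.
  have n1 : 0 < n by clear -Hlk; lia.
  have [a [dPa eab Ea]] : exists a, [/\ d P a = s - 1, e a (q l1)
      & (if l1 is l2.+1 then a = q l2 else a = v)].
    case: l1 Hs Hlk lql eb HbP Hdd => [|l2] Hs Hlk lql eb HbP Hdd.
      exists v; split => //; first by rewrite dsym (geo_y Gp Hi); clear -Hs; lia.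
      by rewrite (geo0 Gq).
    exists (q l2); split => //.
    - rewrite E //; try (clear -Hsn Hs; lia); clear -Hlk; lia.
    - by apply: (geo_edge Gq); clear -Hlk; lia.
  have Hbad : forall u, e (q l1) u -> d c u = n - l1.+1 -> u = a \/ e a u -> False.
    move=> u equ lu; case: l1 Hs Hlk lql eb HbP Hdd equ lu Ea eab => [|l2] Hs Hlk lql eb HbP Hdd equ lu Ea eab;
      subst a; case=> [Eu|eau].
    - by move: lu; rewrite Eu hv; clear -n1; lia.
    - by move/eqP: (nocom u eau ltac:(by rewrite -(geo0 Gq))); rewrite lu subn1.
    - by move: lu; rewrite Eu (geo_lev Gq); clear -Hlk; lia.
    - have := dedge c eau; rewrite lu (geo_lev Gq); clear -Hlk; lia.
  have s1 : 0 < s by clear -Hs; lia.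
  case: Hdd => [Hdd|[Hdd Hsn']].
    apply: (Hbad (q l1.+1)) => //; right.
    case: (a =P q l1.+1) => [Ea'|Na']; first by exfalso; apply: (Hbad (q l1.+1)) => //; left.
    apply: (@HB2 P s Hsn (q l1) a (q l1.+1)) => //; try (by rewrite esym); try (by rewrite dPa subn1);
      try (by rewrite Hdd subn1); by apply/eqP.
  have [m [ebm eqm dPm]] := @HB1 P s Hsn' (q l1) (q l1.+1) HbP Hdd eb.
  case: (a =P m) => [Eam|Nam].
    by apply: (Hbad (q l1.+1)) => //; right; rewrite Eam esym.
  have eam : e a m.
    apply: (@HB2 P s Hsn (q l1) a m) => //; try (by rewrite esym); try (by rewrite dPa subn1);
      try (by rewrite dPm subn1); by apply/eqP.
  rewrite subn1 in dPm.
  case: l1 Hs Hlk lql eb HbP Hdd ebm eqm Hbad eab eam dPa Nam Ea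
    => [|l2] Hs Hlk lql eb HbP Hdd ebm eqm Hbad eab eam dPa Nam Ea.
    subst a.
    have ewm : e w m by rewrite -(geo0 Gq).
    have lm : d c m = n.
      have h1 := dedge c eam; have h2 := dedge2 c eqm.
      move: (nocom m eam ewm); rewrite lql hv in h1 h2 *; move/eqP.
      clear -h1 h2 n1; lia.
    case: i Hi Hs @P dPm dPa Hdd HbP => [|i] Hi Hs P dPm dPa Hdd HbP.
      have hP : P = v by rewrite /P (geo0 Gp).
      rewrite hP in dPm.
      have Hs1 : s = 1 by clear -Hs; lia.
      rewrite Hs1 /= in dPm.
      have E' := d0 dPm.
      by rewrite -E' eirr in eam.
    have [m' [emm' dm'P]] : exists m', e m m' /\ d m' P = i by apply: dstep; rewrite dsym dPm; clear -Hs; lia.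
    have lm' : d c m' = n - 1.
      have h1 := dtri c P m'; have h2 := dedge c emm'.
      rewrite (geo_lev Gp Hi) (dsym P m') dm'P lm in h1 h2.
      clear -h1 h2 Hi; lia.
    have cl : clqL c n by apply: HB2.
    case: (q 1 =P m') => [Eq1|Nq1].
      by move: Hdd; rewrite Eq1 (dsym P m') dm'P; clear -Hs; lia.
    have e1 := cl m (q 1) m' lm ltac:(by rewrite esym) emm' ltac:(by rewrite lql subn1) lm' ltac:(by apply/eqP).
    have := dtri P m' (q 1); rewrite (dsym P m') dm'P (dsym m' (q 1)) (d1 e1) Hdd; clear -Hs; lia.
  have lm : d c m = n - l2.+1.
    subst a.
    have h1 := dedge c eam; have h2 := dedge2 c eqm.
    rewrite lql (geo_lev Gq) in h1 h2; last by clear -Hlk; lia.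
    clear -h1 h2 Hlk; lia.
  pose q' := fun j => if j == l2.+1 then m else q j.
  have Gq' : geo c n w q'.
    split.
    - by rewrite /q'; exact: geo0 Gq.
    - move=> j Hj; rewrite /q'; case: eqP => [->|_]; [rewrite lm; clear; lia | exact: geo_lev Gq Hj].
    - move=> j Hj; rewrite /q'; case: eqP => [Ej|Nj]; case: eqP => [Ej'|Nj'].
      + clear -Ej Ej'; lia.
      + have -> : j.+1 = l2.+2 by clear -Ej; lia. by rewrite esym.
      + have E2 : j = l2 by clear -Ej'; lia.
        by rewrite E2 -Ea.
      + exact: geo_edge Gq Hj.
  apply: (IH (i + l2.+1) _ v w p q' i l2.+1 Hc Gp Gq' erefl); first by clear -Hs; lia.
  split => //; first by clear -Hlk; lia.
  by rewrite /q' eqxx -/P dPm; clear -Hs Hsn'; lia.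
move=> v w p q i l Hc Gp Gq Hs Hv.
case: (posnP l) => [l0|]; last exact: base v w p q i l Hc Gp Gq Hs Hv.
subst l; case: (posnP i) => [i0|i0].
  subst i; case: Hv => _ _; case: Hc => hv hw evw _.
  rewrite (geo0 Gp) (geo0 Gq) (d1 evw); clear; lia.
apply: (base w v q p 0 i (cfgB_sym Hc) Gq Gp) => //; first by rewrite add0n -Hs addn0.
case: Hv => h1 h2 h3; split => //; rewrite dsym; move: h3; rewrite add0n addn0; clear; lia.
Qed.

Lemma typeB_false v w : cfgB v w -> False.
Proof.
move=> Hc; case: (Hc) => hv hw evw nocom.
have n0 : 0 < n.
  case: (posnP n) => // n0; rewrite n0 in hv hw.
  by rewrite -(d0 hv) -(d0 hw) eirr in evw.
have n1 : 1 < n.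
  case: (ltnP 1 n) => // n1.
  have Hn : n = 1 by clear -n0 n1; lia.
  have ecv : e v c by apply: d1E; rewrite dsym hv.
  have ecw : e w c by apply: d1E; rewrite dsym hw.
  by move/eqP: (nocom c ecv ecw); rewrite dxx Hn.
have [p Gp] := geo_exists hv.
have [q Gq] := geo_exists hw.
have Hpq : forall i l, i <= n -> l <= n -> d (p i) (q l) = minn (i + l + 1) (2 * n - i - l).
  move=> i l Hi Hl; apply/eqP; rewrite eqn_leq (ubB Hc Gp Gq Hi Hl) /= leqNgt.
  apply/negP => H; apply: (@claimB (i + l) v w p q i l Hc Gp Gq erefl); by split.
pose g j := if j <= n then p j else q (2 * n - j).
apply: (@iso_cycle (2 * n + 1) g); first by clear -n1; lia.
move=> a b Ha Hb.
wlog Hab : a b Ha Hb / a <= b.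
  move=> W; case: (leqP a b) => H; first exact: W.
  by rewrite dsym cyc_sym W // ltnW.
rewrite /g.
case: ifP => Hak; case: ifP => Hbk.
- rewrite (geo_dd Gp) // /cyc_dist /=; clear -Hab Hbk; lia.
- move/negbT: Hbk; rewrite -ltnNge => Hbk.
  rewrite Hpq; try (clear -Hak; lia); try (clear -Hb Hbk; lia).
  rewrite /cyc_dist /=; clear -Hab Hb Hak Hbk; lia.
- move/negbT: Hak; rewrite -ltnNge => Hak.
  clear -Hab Hak Hbk; lia.
- move/negbT: Hbk; rewrite -ltnNge => Hbk.
  move/negbT: Hak; rewrite -ltnNge => Hak.
  rewrite dsym (geo_dd Gq); try (clear -Hab Hb Hbk Hak; lia).
  rewrite /cyc_dist /=; clear -Hab Hb Hak Hbk; lia.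
Qed.

End TypeB.

Lemma all_levels L : forall c, clqL c L /\ tcL c L.
Proof.
elim/ltn_ind: L => L IH c.
have Hcl : forall c', clqL c' L.
  move=> c' x y z Hx exy exz Hy Hz nyz.
  case: L IH Hx Hy Hz => [|k] IH Hx Hy Hz.
    have E1 := d0 Hx; have E2 := d0 Hy.
    by rewrite -E1 -E2 eirr in exy.
  case Hyz : (e y z) => //; exfalso.
  have HA : forall c'' L', L' <= k -> clqL c'' L' /\ tcL c'' L'.
    by move=> c'' L' HL'; apply: IH; rewrite ltnS.
  apply: (@typeA_false c' x k Hx HA y z).
  split; last by rewrite Hyz.
  by split => //; [rewrite Hy subn1 | rewrite Hz subn1].
split; first exact: Hcl.
move=> v w hv hw evw.
case: (boolP [exists m, [&& e v m, e w m & d c m == L - 1]]) => [/existsP [m /and3P [H1 H2 /eqP H3]]|Hn].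
  by exists m.
exfalso.
have HB1 : forall c' L', L' < L -> tcL c' L' by move=> c' L' HL'; exact: (IH L' HL' c').2.
have HB2 : forall c' L', L' <= L -> clqL c' L'.
  move=> c' L' HL'; case: (ltngtP L' L) => H.
  - exact: (IH L' H c').1.
  - by rewrite ltnNge HL' in H.
  - by rewrite H.
apply: (@typeB_false c L HB1 HB2 v w).
split => // m H1 H2; apply/negP => /eqP H3.
move/negP: Hn; apply; apply/existsP; exists m; by rewrite H1 H2 H3 eqxx.
Qed.

End Basics.

Unset Implicit Arguments.

Theorem lemma1 (T : finType) (e : rel T) :
  simple_connected_graph e -> bridged e ->
  TDC e /\ diamond_weakly_modular e.
Proof.
case=> esym eirr econ hbr.
have AL := all_levels esym eirr econ hbr.
have ds := dsym esym econ.
have tdc : TDC e.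
  move=> u v w H1 H2 H3.
  have [clq tc] := AL (dist e u v) u.
  have evw : e v w by apply: (d1E econ); rewrite -H1.
  have [m [evm ewm hm]] := tc v w erefl (sym_eq H3) evw.
  exists m; split => //.
  - move=> x hx hux nxm; rewrite esym.
    apply: (clq v x m erefl) => //.
    by rewrite esym; apply: (d1E econ).
  - move=> y hy huy nym; rewrite esym.
    apply: (clq w y m) => //; try (by rewrite H3); try (by rewrite huy H3).
    by rewrite esym; apply: (d1E econ).
split => //; split => //.
move=> u v w y h1 h2 h3 h4 h5 h6; exfalso.
have [clq _] := AL (dist e u y) u.
have nvw : v != w by apply/eqP => E; move: h3; rewrite E (dxx econ).
have evy : e y v by rewrite esym; apply: (d1E econ).
have ewy : e y w by rewrite esym; apply: (d1E econ).
have := clq y v w erefl evy ewy ltac:(by rewrite h5 h6) ltac:(by rewrite h6) nvw.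
by move/(d1 eirr econ); rewrite -h3.
Qed.
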